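(* Let $T\in\mathcal{T}$ and $X\subseteq D_T$. (i) If $|X|\le 2$, then $\nu(T-X)=\nu(T)$. (ii) If $|X|=3$ and no vertex of $V(T)\setminus X$ has $3$ neighbors in $X$, then $\nu(T-X)=\nu(T)$. (iii) If $|X|=4$, no vertex of $V(T)\setminus X$ has $3$ neighbors in $X$, and there is no vertex $w\in V(T)\setminus X$ having two neighbors $u,v\in V(T)\setminus X$ with $X\subseteq N_T(u)\cup N_T(v)$, then $\nu(T-X)=\nu(T)$.
   Context: Gallai–Edmonds sets: for a graph $G$, $D_G$ is the set of vertices not covered by at least one maximum matching, $A_G=N_G(D_G)\setminus D_G$, $C_G=V(G)\setminus(A_G\cup D_G)$. $\nu$ denotes the matching number, $n(T)$ the number of vertices. $\mathcal{T}$ is the set of all trees $T$ such that every vertex of $A_T$ has degree at most $3$ in $T$ and $\nu(T)=\frac{n(T)-1}{3}$. *)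

(* Defs.v *)
(* A simple graph is a symmetric irreflexive relation e on a finType V. *)
From mathcomp Require Import all_boot.
Set Implicit Arguments. Unset Strict Implicit. Unset Printing Implicit Defensive.

Section Graph.
Variables (V : finType) (e : rel V).

Definition matching (S : {set V}) (M : {set {set V}}) : bool :=
  [forall f in M, exists u, exists v,
      [&& u \in S, v \in S, e u v & f == [set u; v]]] &&
  [forall f in M, forall g in M, (f != g) ==> [disjoint f & g]].

Definition nu (S : {set V}) : nat :=
  \max_(M : {set {set V}} | matching S M) #|M|.

Definition max_matching (S : {set V}) (M : {set {set V}}) : bool :=
  matching S M && (#|M| == nu S).

Definition covered (M : {set {set V}}) (v : V) : bool := [exists f in M, v \in f].

Definition Dset (S : {set V}) : {set V} :=
  [set v in S | [exists M, max_matching S M && ~~ covered M v]].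
Definition Aset (S : {set V}) : {set V} :=
  [set v in S | (v \notin Dset S) && [exists u in Dset S, e u v]].
Definition Cset (S : {set V}) : {set V} := S :\: (Aset S :|: Dset S).

Definition nbhd (v : V) : {set V} := [set u | e v u].
Definition deg (v : V) : nat := #|nbhd v|.

(* A tree: nonempty, connected, with exactly |V|-1 edges
   (edges counted as ordered pairs, hence the factor 2). *)
Definition is_tree : Prop :=
  0 < #|V| /\ (forall x y : V, connect e x y) /\
  #|[set p : V * V | e p.1 p.2]| = 2 * (#|V| - 1).

Definition in_calT : Prop :=
  is_tree /\ (forall v, v \in Aset setT -> deg v <= 3) /\ 3 * nu setT = #|V| - 1.

End Graph.

(* Main.v *)
Require Import Defs.
From mathcomp Require Import all_boot zify.
Set Implicit Arguments. Unset Strict Implicit. Unset Printing Implicit Defensive.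


Lemma bigcup_setD_const (I T : finType) (B : {set I}) (N : I -> {set T}) (K : {set T}) :
  \bigcup_(i in B) (N i :\: K) = (\bigcup_(i in B) N i) :\: K.
Proof.
apply/setP=> x; rewrite inE; apply/bigcupP/andP.
  by case=> i iB; rewrite inE => /andP[xK xN]; split=> //; apply/bigcupP; exists i.
by case=> xK /bigcupP[i iB xN]; exists i => //; rewrite inE xK.
Qed.

Lemma hall_gen (I T : finType) (t0 : T) n : forall (A : {set I}) (N : I -> {set T}),
  #|A| <= n ->
  (forall B : {set I}, B \subset A -> #|B| <= #|\bigcup_(i in B) N i|) ->
  exists f : I -> T, ({in A &, injective f}) /\ ({in A, forall i, f i \in N i}).
Proof.
elim: n => [|n IH] A N.
  rewrite leqn0 cards_eq0 => /eqP -> _.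
  by exists (fun _ => t0); split=> i; rewrite inE.
move=> cA hallA.
case: (boolP (A == set0)) => [/eqP -> | A0].
  by exists (fun _ => t0); split=> i; rewrite inE.
case: (boolP [exists B : {set I}, [&& B \subset A, B != set0, B != A &
           #|\bigcup_(i in B) N i| <= #|B|]]).
- case/existsP=> B /and4P[sBA B0 BA tight].
  have ltBA : #|B| < #|A| by apply: proper_card; rewrite properEneq BA.
  have [f1 [inj1 in1]] : exists f : I -> T, {in B &, injective f} /\ {in B, forall i, f i \in N i}.
    apply: IH; first by rewrite -ltnS (leq_trans ltBA).
    by move=> C sCB; apply: hallA; apply: subset_trans sCB sBA.
  set NB := \bigcup_(i in B) N i.
  have [f2 [inj2 in2]] : exists f : I -> T, {in A :\: B &, injective f} /\
        {in A :\: B, forall i, f i \in N i :\: NB}.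
    apply: IH.
      rewrite cardsDS // -ltnS; apply: leq_trans cA.
      have : 0 < #|B| by rewrite card_gt0.
      have := subset_leq_card sBA. lia.
    move=> C sCAB; rewrite bigcup_setD_const.
    have sCA : C \subset A by apply: subset_trans sCAB (subsetDl _ _).
    have dCB : [disjoint C & B].
      by rewrite -setI_eq0; apply/eqP/setP=> x; rewrite !inE; apply/andP=> -[xC xB];
         move/subsetP: sCAB => /(_ x xC); rewrite inE xB.
    have := hallA (C :|: B); rewrite subUset sCA sBA bigcup_setU => /(_ isT).
    rewrite (cardsU C B) (disjoint_setI0 dCB) cards0 subn0.
    set NC := \bigcup_(i in C) N i.
    have -> : NC :\: NB = (NC :|: NB) :\: NB by apply/setP=> x; rewrite !inE; case: (x \in NB); rewrite ?andbF ?andbT ?orbF.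
    rewrite cardsDS ?subsetUr // => H.
    rewrite leq_subRL ?(leq_trans tight) //; last by rewrite -(leq_add2l #|C|) (leq_trans H) // leq_addl.
    by rewrite addnC (leq_trans _ H) // leq_add2l.
  exists (fun i => if i \in B then f1 i else f2 i); split.
    move=> i j iA jA /=.
    case: (boolP (i \in B)) => iB; case: (boolP (j \in B)) => jB.
    + exact: inj1.
    + have iAB : j \in A :\: B by rewrite inE jB jA.
      move=> E; have := in2 j iAB; rewrite -E inE => /andP[/negP []].
      by apply/bigcupP; exists i => //; apply: in1.
    + have iAB : i \in A :\: B by rewrite inE iB iA.
      move=> E; have := in2 i iAB; rewrite E inE => /andP[/negP []].
      by apply/bigcupP; exists j => //; apply: in1.
    + by apply: inj2; rewrite inE ?iB ?jB.
  move=> i iA /=; case: ifP => iB; first exact: in1.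
  by have := in2 i; rewrite !inE iB iA => /(_ isT) /andP[].
- rewrite negb_exists => /forallP notight.
  case/set0Pn: A0 => a aA.
  have : 0 < #|\bigcup_(i in [set a]) N i|.
    by apply: leq_trans (hallA [set a] _); rewrite ?cards1 ?sub1set.
  rewrite big_set1 card_gt0 => /set0Pn[t ta].
  have [f' [inj' in']] : exists f : I -> T, {in A :\ a &, injective f} /\
        {in A :\ a, forall i, f i \in N i :\ t}.
    apply: IH.
      by rewrite -ltnS; apply: leq_trans cA; rewrite (cardsD1 a A) aA.
    move=> C sC; rewrite bigcup_setD_const.
    case: (boolP (C == set0)) => [/eqP -> | C0]; first by rewrite cards0.
    have sCA : C \subset A by apply: subset_trans sC (subsetDl _ _).
    have CA : C != A.
      by apply/eqP=> E; move/subsetP: sC => /(_ a); rewrite E aA !inE eqxx => /(_ isT).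
    have := notight C; rewrite sCA C0 CA /= -ltnNge => lt.
    rewrite (cardsD1 t) in lt; rewrite -ltnS (leq_trans lt) //.
    by case: (t \in _).
  exists (fun i => if i == a then t else f' i); split.
    move=> i j iA jA /=.
    case: eqP => [-> | /eqP ia]; case: eqP => [-> // | /eqP ja].
    + move=> E; have := in' j; rewrite !inE ja jA -E eqxx /= => /(_ isT).
      done.
    + move=> E; have := in' i; rewrite !inE ia iA E eqxx /= => /(_ isT).
      done.
    + by apply: inj'; rewrite !inE ?ia ?ja ?iA ?jA.
  move=> i iA /=; case: eqP => [-> // | /eqP ia].
  by have := in' i; rewrite !inE ia iA => /(_ isT) /andP[].
Qed.


Section Match.
Variables (V : finType) (e : rel V).
Hypotheses (e_sym : symmetric e) (e_irr : irreflexive e).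
Implicit Types (S : {set V}) (M : {set {set V}}) (f g : {set V}).

Lemma nu_ge S M : matching e S M -> #|M| <= nu e S.
Proof. by move=> hM; rewrite /nu; apply: (@leq_bigmax_cond _ (fun M => matching e S M) (fun M : {set {set V}} => #|M|) M hM). Qed.

Lemma matching0 S : matching e S set0.
Proof. by apply/andP; split; apply/forallP=> f; rewrite inE. Qed.

Lemma nu_ex S : exists M, matching e S M /\ #|M| = nu e S.
Proof.
have h : 0 < #|[pred M : {set {set V}} | matching e S M]|.
  by apply/card_gt0P; exists set0; rewrite inE matching0.
have [M0 HM0 E] := eq_bigmax_cond (fun M : {set {set V}} => #|M|) h.
by exists M0; split; [rewrite inE in HM0|rewrite /nu -E].
Qed.

Lemma matchingP S M : matching e S M ->
  (forall f, f \in M -> exists u v, [/\ u \in S, v \in S, e u v & f = [set u; v]]) /\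
  (forall f g, f \in M -> g \in M -> f != g -> [disjoint f & g]).
Proof.
case/andP=> /forallP h1 /forallP h2; split.
  move=> f fM; have /existsP[u /existsP[v /and4P[uS vS euv /eqP ->]]] := implyP (h1 f) fM.
  by exists u, v.
move=> f g fM gM fg.
by have /forall_inP /(_ g gM) := implyP (h2 f) fM; rewrite fg.
Qed.

Lemma matchingI S M :
  (forall f, f \in M -> exists u v, [/\ u \in S, v \in S, e u v & f = [set u; v]]) ->
  (forall f g, f \in M -> g \in M -> f != g -> [disjoint f & g]) -> matching e S M.
Proof.
move=> h1 h2; apply/andP; split; apply/forall_inP=> f fM.
  have [u [v [uS vS euv ->]]] := h1 f fM.
  by apply/existsP; exists u; apply/existsP; exists v; rewrite uS vS euv eqxx.
by apply/forall_inP=> g gM; apply/implyP; apply: h2.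
Qed.

Lemma match_same S M f g x : matching e S M -> f \in M -> g \in M -> x \in f -> x \in g -> f = g.
Proof.
move=> /matchingP[_ h2] fM gM xf xg; apply/eqP; apply/negPn/negP=> fg.
by have := h2 f g fM gM fg; rewrite disjoints_subset => /subsetP /(_ x xf); rewrite inE xg.
Qed.

Lemma match_edge S M f x : matching e S M -> f \in M -> x \in f ->
  exists p, [/\ f = [set x; p], e x p, x \in S & p \in S].
Proof.
move=> /matchingP[h1 _] fM xf; have [u [v [uS vS euv E]]] := h1 f fM.
move: xf; rewrite E !inE => /orP[] /eqP ->.
  by exists v.
by exists u; rewrite setUC e_sym.
Qed.

Lemma matching_sub S S' M : S \subset S' -> matching e S M -> matching e S' M.
Proof.
move=> sS /matchingP[h1 h2]; apply: matchingI => // f fM.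
have [u [v [uS vS euv E]]] := h1 f fM; exists u, v; split=> //; exact: (subsetP sS).
Qed.

Lemma nu_mono S S' : S \subset S' -> nu e S <= nu e S'.
Proof. move=> sS; have [M [hM <-]] := nu_ex S; apply: nu_ge; exact: matching_sub hM. Qed.

Lemma matchingD S M f : matching e S M -> matching e S (M :\ f).
Proof.
move=> /matchingP[h1 h2]; apply: matchingI.
  by move=> g; rewrite in_setD1 => /andP[_ /h1].
by move=> g h; rewrite !in_setD1 => /andP[_ gM] /andP[_ hM]; apply: h2.
Qed.

Lemma coveredP M y : reflect (exists2 f, f \in M & y \in f) (covered M y).
Proof. by apply: (iffP exists_inP) => -[f]; exists f. Qed.

Lemma matchingU S M u v : matching e S M -> u \in S -> v \in S -> e u v ->
  ~~ covered M u -> ~~ covered M v -> matching e S ([set u; v] |: M) /\ [set u; v] \notin M.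
Proof.
move=> hM uS vS euv cu cv; have [h1 h2] := matchingP hM; split; last first.
  by apply/negP=> uvM; move/coveredP: cu; apply; exists [set u; v]; rewrite ?set21.
apply: matchingI.
  move=> f; rewrite in_setU1 => /orP[/eqP ->|]; first by exists u, v.
  exact: h1.
have key : forall g, g \in M -> [disjoint [set u; v] & g].
  move=> g gM; rewrite disjoints_subset; apply/subsetP=> x; rewrite !inE => /orP[]/eqP-> ; apply/negP=> xg.
    by move/coveredP: cu; apply; exists g.
  by move/coveredP: cv; apply; exists g.
move=> f g; rewrite !in_setU1 => /orP[/eqP ->|fM] /orP[/eqP ->|gM] //; first by rewrite eqxx.
  by move=> _; apply: key.
by move=> _; rewrite disjoint_sym; apply: key.
exact: h2.
Qed.

Lemma coveredU f M y : covered (f |: M) y = (y \in f) || covered M y.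
Proof.
apply/coveredP/orP.
  by case=> g; rewrite in_setU1 => /orP[/eqP ->|gM] yg; [left|right; apply/coveredP; exists g].
case=> [yf|/coveredP[g gM yg]]; first by exists f; rewrite ?setU11.
by exists g; rewrite // in_setU1 gM orbT.
Qed.

Lemma coveredD S M f y : matching e S M -> f \in M ->
  covered (M :\ f) y = covered M y && (y \notin f).
Proof.
move=> hM fM; apply/coveredP/andP.
  case=> g; rewrite in_setD1 => /andP[gf gM] yg; split; first by apply/coveredP; exists g.
  by apply/negP=> yf; move/eqP: gf; apply; apply: (match_same hM gM fM yg yf).
case=> /coveredP[g gM yg] yf; exists g => //; rewrite in_setD1 gM andbT.
by apply/eqP=> E; move: yf; rewrite -E yg.
Qed.

Lemma card_cover_match S M : matching e S M -> #|cover M| = 2 * #|M|.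
Proof.
move=> hM; have [h1 h2] := matchingP hM.
have tM : trivIset M by apply/trivIsetP=> f g fM gM; apply: h2.
have [_ Heq] := leq_card_cover M; move: Heq; rewrite tM => /eqP ->.
rewrite mulnC -sum_nat_const; apply: eq_bigr => f fM.
have [u [v [_ _ euv ->]]] := h1 f fM.
by rewrite cards2; case: eqP => // uv; move: euv; rewrite uv e_irr.
Qed.

Lemma coveredE M y : covered M y = (y \in cover M).
Proof. by apply/coveredP/bigcupP=> -[f]; exists f. Qed.

End Match.


Section LB.
Variables (V : finType) (r : rel V) (R : {set V}).
Hypothesis r_sym : symmetric r.
Hypothesis HR : forall y, exists2 z, z \in R & connect r y z.

Definition Pd y k := [exists s : k.-tuple V, path r y s && (last y s \in R)].

Lemma Pd_ex y : exists k, Pd y k.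
Proof.
have [z zR /connectP[p pp lp]] := HR y.
exists (size p); apply/existsP; exists (in_tuple p) => /=; by rewrite pp -lp zR.
Qed.

Definition dist y := ex_minn (Pd_ex y).

Lemma dist_P y : Pd y (dist y).
Proof. by rewrite /dist; case: ex_minnP. Qed.

Lemma dist_min y k : Pd y k -> dist y <= k.
Proof. by rewrite /dist; case: ex_minnP => m _ h /h. Qed.

Definition par y := head y (odflt [tuple of nseq (dist y) y]
   [pick s : (dist y).-tuple V | path r y s && (last y s \in R)]).

Lemma par_prop y : y \notin R -> r y (par y) /\ dist (par y) < dist y.
Proof.
move=> yR; rewrite /par.
case: pickP => [s /andP[ps ls] | none]; last first.
  exfalso; have /existsP[s hs] := dist_P y.
  by have := none s; rewrite hs.
move: ps ls; case: s => -[|x s'] /= hsz; first by move=> _ /= ls; rewrite ls in yR.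
case/andP=> rx ps ls; split=> //.
have Px : Pd x (size s').
  by apply/existsP; exists (in_tuple s'); rewrite /= ps ls.
have h := dist_min Px; rewrite -(eqP hsz) /=; lia.
Qed.

Lemma LB : 2 * #|~: R| <= #|[set p : V * V | r p.1 p.2 && ((p.1 \notin R) || (p.2 \notin R))]|.
Proof.
set P1 := [set (y, par y) | y in ~: R].
set P2 := [set (par y, y) | y in ~: R].
have c1 : #|P1| = #|~: R| by apply: card_imset => a b [].
have c2 : #|P2| = #|~: R| by apply: card_imset => a b [].
have d : [disjoint P1 & P2].
  rewrite -setI_eq0; apply/eqP/setP=> -[a b]; rewrite !inE.
  apply/andP=> -[/imsetP[y yR [-> ->]] /imsetP[y' y'R [E1 E2]]].
  rewrite inE in yR; rewrite inE in y'R.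
  have [_ h1] := par_prop yR; have [_ h2] := par_prop y'R.
  move: h1 h2; rewrite -E1 E2; lia.
have := leq_card_setU P1 P2; rewrite d => -[_ /eqP hU].
rewrite mul2n -addnn -{1}c1 -{1}c2 -hU.
apply: subset_leq_card; apply/subsetP=> -[a b]; rewrite !inE.
case/orP=> /imsetP[y yR [-> ->]]; rewrite inE in yR; have [h _] := par_prop yR => /=.
  by rewrite h yR.
by rewrite r_sym h yR orbT.
Qed.

End LB.

Section Tree.
Variables (V : finType) (e : rel V).
Hypotheses (e_sym : symmetric e) (e_irr : irreflexive e) (HT : is_tree e).

Definition pin (W : {set V}) := [set p : V * V | [&& p.1 \in W, p.2 \in W & e p.1 p.2]].

Lemma FB (W : {set V}) : W != set0 -> #|pin W| + 2 <= 2 * #|W|.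
Proof.
case/set0Pn=> z zW.
case: HT => _ [conn cardE].
have HR : forall y, exists2 z, z \in W & connect e y z by move=> y; exists z.
have hLB := LB e_sym HR.
set Out := [set p : V * V | e p.1 p.2 && ((p.1 \notin W) || (p.2 \notin W))] in hLB.
have hpart : #|pin W| + #|Out| = #|[set p : V * V | e p.1 p.2]|.
  rewrite -cardsUI.
  have -> : pin W :&: Out = set0.
    by apply/setP=> -[a b]; rewrite !inE /=; case: (a \in W); case: (b \in W); rewrite ?andbF.
  rewrite cards0 addn0; apply: eq_card => -[a b]; rewrite !inE /=.
  by case: (a \in W); case: (b \in W); case: (e a b).
move: hLB hpart; rewrite cardE cardsCs setCK.
have := subset_leq_card (subsetT W); rewrite cardsT.
have : 0 < #|W| by apply/card_gt0P; exists z.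
lia.
Qed.

Lemma nn_ne (c : seq V) w : uniq c -> 3 <= size c -> w \in c -> next c (next c w) != w.
Proof.
move=> uc sc wc; have [i q E] := rot_to wc.
rewrite -(next_rot i uc (next c w)) -(next_rot i uc w) E.
have : uniq (w :: q) by rewrite -E rot_uniq.
have : 3 <= size (w :: q) by rewrite -E size_rot.
case: q {E} => [|a [|b q']] //= _.
rewrite !inE !eqxx /=; case/andP=> /norP[wa /norP[wb _]] /andP[/norP[ab _] _].
by rewrite (eq_sym a w) (negbTE wa) eq_sym.
Qed.

Lemma no_cycle_c (c : seq V) : uniq c -> cycle e c -> 3 <= size c -> False.
Proof.
move=> us cyc sc.
set W := [set y in c].
set F := [set (w, next c w) | w in W].
set B := [set (next c w, w) | w in W].
have cF : #|F| = #|W| by apply: card_imset => a b [].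
have cB : #|B| = #|W| by apply: card_imset => a b [].
have d : [disjoint F & B].
  rewrite -setI_eq0; apply/eqP/setP=> -[a b]; rewrite !inE.
  apply/andP=> -[/imsetP[y yW [-> ->]] /imsetP[y' y'W [E1 E2]]].
  rewrite inE in yW.
  have := nn_ne us sc yW.
  by rewrite E2 -E1 eqxx.
have W0 : W != set0.
  have [x xc] : exists x, x \in c by case: (c) sc => // x ? _; exists x; rewrite mem_head.
  by apply/set0Pn; exists x; rewrite inE.
have := FB W0.
have : #|F| + #|B| <= #|pin W|.
  have := leq_card_setU F B; rewrite d => -[_ /eqP <-].
  apply: subset_leq_card; apply/subsetP=> -[a b]; rewrite in_setU.
  case/orP=> /imsetP[y yW [-> ->]]; rewrite inE in yW; rewrite /pin !in_set /= mem_next yW /=.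
    exact: next_cycle.
  by rewrite e_sym; apply: next_cycle.
lia.
Qed.

Lemma no_cycle x s : uniq (x :: s) -> path e x s -> 2 <= size s -> e (last x s) x -> False.
Proof.
move=> us ps ss ls; apply: (@no_cycle_c (x :: s)) => //.
by rewrite /= rcons_path ps ls.
Qed.

End Tree.


Section GL.
Variables (V : finType) (e : rel V).
Hypotheses (e_sym : symmetric e) (e_irr : irreflexive e) (HT : is_tree e).
Implicit Types (S : {set V}) (M : {set {set V}}) (f g : {set V}).

Lemma cyc_in x s y : uniq (x :: s) -> path e x s -> y \in s -> y != head x s -> e y x -> False.
Proof.
move=> us ps ys yh eyx; case/splitPr: ys us ps yh => p1 p2 us ps yh.
apply: (@no_cycle _ e e_sym HT x (rcons p1 y)).
- move: us; rewrite -cats1 /= !cat_uniq /= !mem_cat !inE.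
  case/and5P=> /norP[h1 /norP[h2 _]] u1 /norP[h3 _] _ _.
  by rewrite orbF negb_or h1 h2 u1 h3.
- by move: ps; rewrite -cats1 !cat_path /= => /andP[-> /andP[->]].
- by case: p1 yh {us ps} => [|a p1] /=; rewrite ?eqxx // size_rcons.
- by rewrite last_rcons.
Qed.

Lemma cyc_out x s p a : uniq (x :: s) -> path e x s -> p \in s -> a \notin x :: s ->
  e p a -> e a x -> False.
Proof.
move=> us ps ys ya epa eax; case/splitPr: ys us ps ya => p1 p2 us ps ya.
apply: (@no_cycle _ e e_sym HT x (p1 ++ [:: p; a])).
- move: us ya; rewrite /= !cat_uniq /= !mem_cat !inE.
  case/and5P=> /norP[h1 /norP[h2 _]] u1 /norP[h3 _] _ _.
  rewrite mem_cat inE => /norP[ax /norP[ap1 /norP[ap _]]].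
  by rewrite !negb_or h1 h2 u1 h3 (eq_sym x a) ax ap1 (eq_sym p a) ap.
- by move: ps; rewrite !cat_path /= => /andP[-> /andP[-> _]]; rewrite epa.
- by rewrite size_cat /= addn2.
- by rewrite last_cat.
Qed.

Definition maxm M := matching e setT M /\ #|M| = nu e setT.

Lemma maxm_add M u v : maxm M -> e u v -> ~~ covered M u -> ~~ covered M v -> False.
Proof.
move=> [hM cM] euv cu cv.
have [hM' nin] := matchingU hM (in_setT u) (in_setT v) euv cu cv.
by have := nu_ge hM'; rewrite cardsU1 nin cM add1n ltnn.
Qed.

Lemma maxm_swap M f u v : maxm M -> f \in M -> e u v -> u \in f ->
  ~~ covered M v -> maxm ([set u; v] |: (M :\ f)) /\
  (forall y, covered ([set u; v] |: (M :\ f)) y = (y \in [set u; v]) || (covered M y && (y \notin f))).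
Proof.
move=> [hM cM] fM euv uf cv.
have hD := matchingD f hM.
have cu' : ~~ covered (M :\ f) u by rewrite (coveredD _ hM fM) uf andbF.
have cv' : ~~ covered (M :\ f) v by rewrite (coveredD _ hM fM) (negbTE cv).
have [hN nin] := matchingU hD (in_setT u) (in_setT v) euv cu' cv'.
split; last by move=> y; rewrite coveredU (coveredD _ hM fM).
split=> //; rewrite cardsU1 nin (cardsD1 f M) fM add1n in cM *; by rewrite cM.
Qed.

Lemma GL k : forall M M', #|M' :\: M| < k -> maxm M -> maxm M' ->
  forall v, ~~ covered M' v -> covered M v ->
  exists w1 Q M'', [/\ [set v; w1] \in M, path e v (w1 :: Q), uniq (v :: w1 :: Q), maxm M'' &
   [/\ ~~ covered M'' v,
   (forall f, f \in M -> (forall x, x \in f -> x \notin v :: w1 :: Q) -> f \in M'') &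
   (forall y, y \notin v :: w1 :: Q -> ~~ covered M y -> ~~ covered M'' y)]].
Proof.
elim: k => [|k IH] M M' //.
move=> ck mM mM' v cv' cv.
have [hM cM] := mM; have [hM' cM'] := mM'.
case/coveredP: cv => f fM vf.
have [w1 [Ef evw1 _ _]] := match_edge e_sym hM fM vf.
case: (boolP (covered M' w1)) => [cw1'|ncw1']; last first.
  by exfalso; apply: (maxm_add mM' evw1).
case/coveredP: cw1' => f' f'M' w1f'.
have [w2 [Ef' ew1w2 _ _]] := match_edge e_sym hM' f'M' w1f'.
have w2v : w2 != v.
  by apply/eqP=> E; move/coveredP: cv'; apply; exists f' => //; rewrite Ef' -E set22.
have vw1 : v != w1 by apply/eqP=> E; move: evw1; rewrite E e_irr.
have w1w2 : w1 != w2 by apply/eqP=> E; move: ew1w2; rewrite E e_irr.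
have w1f : w1 \in f by rewrite Ef set22.
have f'nM : f' \notin M.
  apply/negP=> f'M.
  have E := match_same hM f'M fM w1f' w1f.
  by have := set22 w1 w2; rewrite -Ef' E Ef !inE (negbTE w2v) eq_sym (negbTE w1w2).
case: (boolP (covered M w2)) => [cw2|ncw2].
-
  have ew1v : e w1 v by rewrite e_sym.
  have [mM'1 covM'1] := maxm_swap mM' f'M' ew1v w1f' cv'.
  set M'1 := [set w1; v] |: (M' :\ f') in mM'1 covM'1.
  have ck1 : #|M'1 :\: M| < k.
    have sub : M'1 :\: M \subset (M' :\: M) :\ f'.
      apply/subsetP=> g; rewrite !inE => /andP[gM /orP[/eqP Eg | /andP[gf' gM']]].
        by move: gM; rewrite Eg setUC -Ef fM.
      by rewrite gf' gM gM'.
    have := subset_leq_card sub.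
    have h := cardsD1 f' (M' :\: M); rewrite inE f'nM f'M' add1n in h.
    move=> le; rewrite h ltnS in ck; exact: leq_ltn_trans le ck.
  have ncw2' : ~~ covered M'1 w2.
    rewrite covM'1 !inE Ef' set22 /= andbF orbF negb_or (eq_sym w2 w1) w1w2 /=.
    done.
  have [w3 [Q' [MQ [wM pQ uQ mMQ [ncQ keepQ expQ]]]]] := IH M M'1 ck1 mM mM'1 w2 ncw2' cw2.
  have w1nQ : w1 \notin w2 :: w3 :: Q'.
    apply/negP; rewrite inE => /orP[/eqP E|H]; first by move/eqP: w1w2.
    case: (w1 =P w3) => [E | ne].
      have w1w : w1 \in [set w2; w3] by rewrite E set22.
      have := match_same hM wM fM w1w w1f => E2.
      by have := set21 w2 w3; rewrite E2 Ef !inE (negbTE w2v) eq_sym (negbTE w1w2).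
    by apply: (cyc_in uQ pQ H _ ew1w2); apply/eqP.
  have vnQ : v \notin w2 :: w3 :: Q'.
    apply/negP; rewrite inE => /orP[/eqP E|H]; first by move: w2v; rewrite E eqxx.
    by apply: (cyc_out uQ pQ H w1nQ evw1 ew1w2).
  have fMQ : f \in MQ.
    apply: (keepQ f fM) => x; rewrite Ef !inE => /orP[] /eqP ->; [exact: vnQ | exact: w1nQ].
  have [mM'' covM''] := maxm_swap mMQ fMQ ew1w2 w1f ncQ.
  exists w1, [:: w2, w3 & Q'], ([set w1; w2] |: (MQ :\ f)); split.
  + by rewrite -Ef.
  + by rewrite /= evw1 ew1w2 /=; move: pQ => /= ->.
  + rewrite /= in uQ; rewrite [uniq _]/= uQ andbT.
    rewrite inE negb_or vw1 /=; move: vnQ w1nQ; rewrite /= => -> ->; done.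
  + exact: mM''.
  split.
  + by rewrite covM'' (_ : v \in f) ?andbF ?orbF ?Ef ?set21 // !inE negb_or vw1 eq_sym w2v.
  + move=> g gM hg; rewrite in_setU1 in_setD1; apply/orP; right; apply/andP; split.
      by apply/eqP=> E; move: (hg v); rewrite E vf inE eqxx => /(_ isT).
    by apply: (keepQ g gM) => x /hg; rewrite !inE negb_or => /andP[_]; rewrite negb_or => /andP[].
  + move=> y; rewrite inE negb_or => /andP[yv]; rewrite inE negb_or => /andP[yw1 yQ] ncy.
    have := expQ y yQ ncy => ncyQ.
    by rewrite covM'' (negbTE ncyQ) /= orbF !inE negb_or yw1 /=; move: yQ; rewrite inE negb_or => /andP[].
-
  have [mM'' covM''] := maxm_swap mM fM ew1w2 w1f ncw2.
  exists w1, [:: w2], ([set w1; w2] |: (M :\ f)); split.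
  + by rewrite -Ef.
  + by rewrite /= evw1 ew1w2.
  + by rewrite /= !inE negb_or vw1 eq_sym w2v w1w2.
  + exact: mM''.
  split.
  + by rewrite covM'' vf andbF orbF !inE negb_or vw1 eq_sym w2v.
  + move=> g gM hg; rewrite in_setU1 in_setD1 gM andbT; apply/orP; right.
    by apply/eqP=> E; move: (hg v); rewrite E vf inE eqxx => /(_ isT).
  + move=> y; rewrite !inE => /norP[yv /norP[yw1 yw2]] ncy.
    by rewrite covM'' !inE (negbTE yw1) (negbTE yw2) (negbTE ncy).
Qed.
End GL.


Section F.
Variables (V : finType) (e : rel V).
Hypotheses (e_sym : symmetric e) (e_irr : irreflexive e) (HT : is_tree e).
Implicit Types (S : {set V}) (M : {set {set V}}) (f g : {set V}).

Notation D := (Dset e setT).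
Notation A := (Aset e setT).

Lemma DsetP v : reflect (exists M, maxm e M /\ ~~ covered M v) (v \in D).
Proof.
rewrite inE in_setT /=; apply: (iffP existsP) => -[M hM]; exists M.
  by case/andP: hM => /andP[h1 /eqP h2] h3.
by case: hM => -[h1 h2] h3; rewrite /max_matching h1 h2 eqxx.
Qed.

Lemma F1 u x : u \in D -> x \in D -> e u x -> False.
Proof.
move=> /DsetP[M [mM cu]] /DsetP[M' [mM' cx]] eux.
case: (boolP (covered M x)) => cxM; last by apply: (maxm_add mM eux).
have [w1 [Q [M'' [wM pQ uQ mM'' [ncx _ expQ]]]]] :=
  GL e_sym e_irr HT (ltnSn #|M' :\: M|) mM mM' cx cxM.
case: (boolP (u \in [:: x, w1 & Q])) => uP.
  move: uP; rewrite inE => /orP[/eqP E|uP]; first by move: eux; rewrite E e_irr.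
  apply: (cyc_in e_sym HT uQ pQ uP _ eux).
  apply/eqP=> E; move/coveredP: cu; apply; exists [set x; w1] => //.
  by rewrite E /= set22.
exact: (maxm_add mM'' eux (expQ u uP cu) ncx).
Qed.

Lemma F4 M a : maxm e M -> a \in A -> exists2 p, p \in D & [set a; p] \in M.
Proof.
move=> mM; rewrite inE in_setT /= => /andP[aD /exists_inP[d dD eda]].
have [hM cM] := mM.
have ca : covered M a.
  case: (boolP (covered M a)) => // nca.
  by move: aD; have -> : a \in D by apply/DsetP; exists M.
case/coveredP: ca => f fM af.
have [p [Ef eap _ _]] := match_edge e_sym hM fM af.
exists p; last by rewrite -Ef.
case: (p =P d) => [-> //|pd].
have pa : p != a by apply/eqP=> E; move: eap; rewrite E e_irr.
have pf : p \in f by rewrite Ef set22.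
have ead : e a d by rewrite e_sym.
have key : forall M1, maxm e M1 -> f \in M1 -> ~~ covered M1 d -> p \in D.
  move=> M1 mM1 fM1 cd1.
  have [mM2 cov2] := maxm_swap mM1 fM1 ead af cd1.
  apply/DsetP; eexists; split; first exact: mM2.
  by rewrite cov2 pf andbF orbF !inE negb_or pa; apply/eqP.
case: (boolP (covered M d)) => cdM; last exact: key mM fM cdM.
have [M' [mM' cd']] := DsetP _ dD.
have [w1 [Q [M'' [wM pQ uQ mM'' [ncd keepQ _]]]]] :=
  GL e_sym e_irr HT (ltnSn #|M' :\: M|) mM mM' cd' cdM.
have aP : a \notin [:: d, w1 & Q].
  apply/negP; rewrite inE => /orP[/eqP E|aP]; first by move: aD; rewrite E dD.
  case: (a =P w1) => [E | ne].
    have aw : a \in [set d; w1] by rewrite E set22.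
    have E2 := match_same hM wM fM aw af.
    move: pf; rewrite -E2 !inE => /orP[/eqP /pd // | /eqP E3].
    by move/eqP: pa; rewrite E3 E.
  by apply: (cyc_in e_sym HT uQ pQ aP _ ead); apply/eqP.
have pP : p \notin [:: d, w1 & Q].
  apply/negP; rewrite inE => /orP[/eqP E|pP]; first by apply: pd.
  by apply: (cyc_out e_sym HT uQ pQ pP aP _ ead); rewrite e_sym.
apply: (key M'') => //; apply: (keepQ f fM) => x; rewrite Ef !inE => /orP[] /eqP -> //.
Qed.

End F.


Section St.
Variables (V : finType) (e : rel V).
Hypotheses (e_sym : symmetric e) (e_irr : irreflexive e).
Implicit Types (S X Y : {set V}) (M : {set {set V}}) (f g : {set V}).

Notation D := (Dset e setT).
Notation A := (Aset e setT).

Definition PP X := [set p : V * V | (p.1 \in X) && e p.1 p.2].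

Lemma card_PP X : #|PP X| = \sum_(x in X) deg e x.
Proof.
rewrite /PP -sum1dep_card.
rewrite -(pair_big_dep (fun x => x \in X) (fun x y => e x y) (fun _ _ => 1)).
by apply: eq_bigr => x _; rewrite sum1dep_card.
Qed.

Lemma PP_U X Y : [disjoint X & Y] -> #|PP (X :|: Y)| = #|PP X| + #|PP Y|.
Proof.
move=> dXY; rewrite -cardsUI.
have -> : PP X :&: PP Y = set0.
  apply/setP=> -[a b]; rewrite !inE /=; apply/negbTE; apply/negP=> /andP[/andP[aX _] /andP[aY _]].
  by move: dXY; rewrite disjoints_subset => /subsetP /(_ a aX); rewrite inE aY.
rewrite cards0 addn0; apply: eq_card => -[a b]; rewrite !inE /=.
by rewrite andb_orl.
Qed.

Lemma AD_disj : [disjoint A & D].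
Proof.
rewrite disjoints_subset; apply/subsetP=> x; rewrite inE => /andP[_ /andP[xD _]].
by rewrite inE.
Qed.

Lemma deg_sum_le (B : {set V}) k : (forall x, x \in B -> deg e x <= k) -> \sum_(x in B) deg e x <= k * #|B|.
Proof.
move=> h; rewrite mulnC -sum_nat_const; apply: leq_sum => x; exact: h.
Qed.

Lemma deg_sum_eq (B : {set V}) k a : (forall x, x \in B -> deg e x <= k) ->
  \sum_(x in B) deg e x = k * #|B| -> a \in B -> deg e a = k.
Proof.
move=> h hs aB; apply/eqP; rewrite eqn_leq h //=.
have h' : forall x, x \in B :\ a -> deg e x <= k by move=> x; rewrite in_setD1 => /andP[_ /h].
have := deg_sum_le h'.
rewrite (big_setD1 a aB) /= in hs.
rewrite (cardsD1 a B) aB in hs *; move: hs; rewrite add1n mulnS. lia.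
Qed.

Hypothesis HC : in_calT e.

Lemma structure :
  [/\ (forall v, v \notin A -> v \in D), (forall a y, a \in A -> e a y -> y \in D),
      (forall a, a \in A -> deg e a = 3) & nu e setT = #|A|].
Proof.
case: HC => HT [degA Hnu].
case: (HT) => n0 [_ cardE].
set n := #|V| in n0 cardE Hnu.
set nu0 := nu e setT in Hnu *.
set C := ~: (A :|: D).
have hnC : n = #|A| + #|D| + #|C|.
  have h1 := cardsC (A :|: D); have h2 := cardsU A D.
  rewrite (disjoint_setI0 AD_disj) cards0 in h2; rewrite /C /n; lia.
have [M [hM cM]] := nu_ex e setT.
have mM : maxm e M by [].
set U := ~: cover M.
have cU : #|U| + 2 * nu0 = n.
  have h1 := cardsC (cover M); rewrite (card_cover_match e_irr hM) cM in h1.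
  rewrite /U /n; lia.
have UD : U \subset D.
  apply/subsetP=> y; rewrite inE -coveredE => ncy; apply/DsetP; exists M; split=> //.
have nAD : forall a, a \in A -> a \notin D.
  by move=> a; rewrite inE => /andP[_ /andP[]].
have hAU : #|A| + #|U| <= #|D|.
  pose g a := odflt a [pick p | [set a; p] \in M].
  have gP : forall a, a \in A -> g a \in D /\ [set a; g a] \in M.
    move=> a aA; have [p pD pM] := F4 e_sym e_irr HT mM aA.
    rewrite /g; case: pickP => [q qM | none]; last by move: (none p); rewrite pM.
    split=> //.
    have aq : a \in [set a; q] by rewrite set21.
    have ap : a \in [set a; p] by rewrite set21.
    have E := match_same hM qM pM aq ap.
    have := set22 a q; rewrite E in_set2 => /orP[/eqP Eq | /eqP ->]; last exact: pD.
    have := set22 a p; rewrite -E Eq in_set2 orbb => /eqP Ep.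
    by move: (nAD a aA); rewrite -Ep pD.
  have ginj : {in A &, injective g}.
    move=> a b aA bA Eg; have [gaD gaM] := gP a aA; have [gbD gbM] := gP b bA.
    have h1 : g a \in [set a; g a] by rewrite set22.
    have h2 : g a \in [set b; g b] by rewrite Eg set22.
    have E := match_same hM gaM gbM h1 h2.
    have := set21 a (g a); rewrite E !inE => /orP[/eqP -> // | /eqP Ea].
    by move: (nAD a aA); rewrite Ea -Eg gaD.
  have sub : g @: A \subset D :&: cover M.
    apply/subsetP=> y /imsetP[a aA ->]; have [gaD gaM] := gP a aA.
    by rewrite inE gaD /=; apply/bigcupP; exists [set a; g a]; rewrite ?set22.
  have := subset_leq_card sub; rewrite card_in_imset //.
  have := cardsID (cover M) D.
  have -> : D :\: cover M = U.
    apply/setP=> y; rewrite /U in_setD in_setC; case: (boolP (y \in cover M)) => //= yc.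
    by apply/(subsetP UD); rewrite /U in_setC.
  lia.
have PT : #|PP setT| = 2 * (n - 1).
  by rewrite -cardE; apply: eq_card => p; rewrite !inE.
have dADC : [disjoint A :|: D & C].
  by rewrite /C disjoints_subset setCK subxx.
have Ppart : #|PP setT| = #|PP A| + #|PP D| + #|PP C|.
  have E : [set: V] = (A :|: D) :|: C by rewrite /C setUCr.
  by rewrite {1}E (PP_U dADC) (PP_U AD_disj).
have PA_le : #|PP A| <= 3 * #|A| by rewrite card_PP; apply: deg_sum_le.
have PD2 : forall p, p \in PP D -> p.2 \in A.
  move=> [a b]; rewrite inE /= => /andP[aD eab].
  have bD : b \notin D by apply/negP=> bD; apply: (F1 e_sym e_irr HT aD bD eab).
  by rewrite inE in_setT bD /=; apply/exists_inP; exists a.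
have PC2 : forall p, p \in PP C -> p.2 \notin D.
  move=> [a b]; rewrite inE /= => /andP[aC eab]; apply/negP=> bD.
  move: aC; rewrite /C in_setC in_setU => /norP[aA aD]; move/negP: aA; apply.
  by rewrite inE in_setT aD /=; apply/exists_inP; exists b => //; rewrite e_sym.
set PCA := [set p in PP C | p.2 \in A].
set PCC := [set p in PP C | p.2 \in C].
have PCsplit : #|PP C| <= #|PCA| + #|PCC|.
  apply: leq_trans (leq_card_setU _ _); apply: subset_leq_card; apply/subsetP=> p pC.
  rewrite in_setU; case hA: (p.2 \in A).
    by rewrite [p \in PCA]in_set pC hA.
  have hC : p.2 \in C by rewrite /C in_setC in_setU hA (negbTE (PC2 p pC)).
  by rewrite [p \in PCC]in_set pC hC orbT.
set SW := [set (p.2, p.1) | p in PP D :|: PCA].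
have cSW : #|SW| = #|PP D| + #|PCA|.
  rewrite card_imset; last by move=> [a b] [c d] [-> ->].
  rewrite cardsU; have -> : PP D :&: PCA = set0.
    apply/setP=> -[a b]; rewrite in_set0; apply/negP; rewrite in_setI => /andP[h1 h2].
    have aD : a \in D by move: h1; rewrite [_ \in PP D]in_set => /andP[].
    have aC : a \in C by move: h2; rewrite [_ \in PCA]in_set [_ \in PP C]in_set => /andP[/andP[]].
    by move: aC; rewrite /C in_setC in_setU aD orbT.
  by rewrite cards0 subn0.
have sSW : SW \subset PP A.
  apply/subsetP=> q /imsetP[[a b] pin ->]; rewrite [_ \in PP A]in_set /=.
  move: pin; rewrite in_setU => /orP[pD | pC].
    have := PD2 _ pD; rewrite /= => ->.
    by move: pD; rewrite [_ \in PP D]in_set /= => /andP[_ eab]; rewrite e_sym.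
  by move: pC; rewrite [_ \in PCA]in_set [_ \in PP C]in_set /= => /andP[/andP[_ eab] ->]; rewrite e_sym.
have swle := subset_leq_card sSW.
have PCC_le : C != set0 -> #|PCC| + 2 <= 2 * #|C|.
  move=> C0; apply: leq_trans (FB e_sym HT C0); rewrite leq_add2r.
  apply: subset_leq_card; apply/subsetP=> -[a b].
  rewrite [_ \in PCC]in_set [_ \in PP C]in_set /pin in_set /= => /andP[/andP[aC eab] bC].
  by rewrite aC bC eab.
have C0 : C = set0.
  apply/eqP; apply/negPn/negP => C0; have := PCC_le C0.
  move: hnC cU Hnu hAU PT Ppart PA_le PCsplit cSW swle n0; lia.
have PC0 : #|PP C| = 0 by rewrite card_PP C0 big_set0.
have cC0 : #|C| = 0 by rewrite C0 cards0.
have [ePA ePD enu] : [/\ #|PP A| = 3 * #|A|, #|SW| = #|PP A| & nu0 = #|A|].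
  move: hnC cU Hnu hAU PT Ppart PA_le PCsplit cSW swle n0 PC0 cC0.
  move=> *; split; lia.
split=> //.
- move=> v vA; have : v \notin C by rewrite C0 in_set0.
  by rewrite /C in_setC in_setU (negbTE vA) /= negbK.
- move=> a y aA eay.
  have : (a, y) \in SW.
    have -> : SW = PP A by apply/eqP; rewrite eqEcard sSW ePD /=.
    by rewrite [_ \in PP A]in_set /= aA eay.
  case/imsetP=> -[c d]; rewrite in_setU => /orP[pD | pC] [Ea Ey]; subst.
    by move: pD; rewrite [_ \in PP D]in_set /= => /andP[].
  move: pC; rewrite [_ \in PCA]in_set [_ \in PP C]in_set /= => /andP[/andP[]].
  by rewrite C0 in_set0.
- move=> a aA; apply: (deg_sum_eq degA _ aA); by rewrite -card_PP.
Qed.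
End St.


Section Fin.
Variables (V : finType) (e : rel V).
Hypotheses (e_sym : symmetric e) (e_irr : irreflexive e) (HC : in_calT e).
Implicit Types (S X Y B : {set V}) (M : {set {set V}}).

Notation D := (Dset e setT).
Notation A := (Aset e setT).

Lemma nAD' a : a \in A -> a \notin D.
Proof. by rewrite inE => /andP[_ /andP[]]. Qed.

Lemma NB_big B : B \subset A -> B != set0 ->
  (2 * #|B|).+1 <= #|\bigcup_(a in B) nbhd e a|.
Proof.
move=> sBA B0.
have [HT _] := HC.
have [_ ADn deg3 _] := structure e_sym e_irr HC.
set NB := \bigcup_(a in B) nbhd e a.
have NBD : forall y, y \in NB -> y \in D.
  by move=> y /bigcupP[a aB]; rewrite inE; apply: ADn; apply: (subsetP sBA).
set W := B :|: NB.
have W0 : W != set0 by case/set0Pn: (B0) => b bB; apply/set0Pn; exists b; rewrite in_setU bB.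
have hFB := FB e_sym HT W0.
have cPB : #|PP e B| = 3 * #|B|.
  rewrite card_PP mulnC -sum_nat_const; apply: eq_bigr => a aB; apply: deg3; exact: (subsetP sBA).
set SWB := [set (p.2, p.1) | p in PP e B].
have cSWB : #|SWB| = #|PP e B| by apply: card_imset => -[a b] [c d] [-> ->].
have disj : [disjoint PP e B & SWB].
  rewrite -setI_eq0; apply/eqP/setP=> -[a b]; rewrite in_set0 in_setI; apply/negP=> /andP[h1 /imsetP[[c d] h2 [Ea Eb]]].
  move: h1 h2; rewrite /PP !in_set /= => /andP[aB _] /andP[cB ecd].
  have : a \in D by apply: NBD; rewrite Ea; apply/bigcupP; exists c => //; rewrite inE.
  by rewrite (negbTE (nAD' (subsetP sBA a aB))).
have sub : PP e B :|: SWB \subset pin e W.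
  apply/subsetP=> -[a b]; rewrite in_setU => /orP[h | /imsetP[[c d] h [-> ->]]];
    move: h; rewrite /PP /pin !in_set /= => /andP[aB eab].
    rewrite aB eab /= andbT; apply/orP; right; apply/bigcupP; exists a => //; by rewrite inE.
  rewrite aB e_sym eab /= andbT; apply/orP; right; apply/bigcupP; exists c => //; by rewrite inE.
have := subset_leq_card sub; rewrite cardsU (disjoint_setI0 disj) cards0 subn0 cSWB cPB.
have := cardsU B NB; rewrite -/W.
move: hFB; lia.
Qed.

Lemma hall_cond X : X \subset D -> #|X| <= 4 ->
  (3 <= #|X| -> forall w, w \notin X -> #|X :&: nbhd e w| < 3) ->
  (#|X| = 4 -> ~ (exists w u v, [&& w \notin X, u \notin X, v \notin X, u != v,
                          e w u, e w v & X \subset nbhd e u :|: nbhd e v])) ->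
  forall B, B \subset A -> #|B| <= #|\bigcup_(a in B) (nbhd e a :\: X)|.
Proof.
move=> XD X4 h3 h4 B sBA.
have [_ ADn deg3 _] := structure e_sym e_irr HC.
have XnA : forall a, a \in A -> a \notin X.
  by move=> a aA; apply/negP=> /(subsetP XD) aD; move: (nAD' aA); rewrite aD.
rewrite bigcup_setD_const cardsD.
set NB := \bigcup_(a in B) nbhd e a.
have hXI : #|NB :&: X| <= #|X| by rewrite subset_leq_card // subsetIr.
case: (posnP #|B|) => [-> //|B0].
have B0' : B != set0 by rewrite -card_gt0.
have big := NB_big sBA B0'; rewrite -/NB in big.
case: (ltnP 2 #|B|) => B3; first by lia.
case: (ltnP 1 #|B|) => B2; last first.
  have : #|B| == 1 by lia.
  case/cards1P=> a Ea; rewrite Ea cards1.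
  have aA : a \in A by apply: (subsetP sBA); rewrite Ea set11.
  rewrite /NB Ea big_set1.
  have d3 := deg3 a aA; rewrite /deg in d3.
  have := subset_leq_card (subsetIr (nbhd e a) X).
  case: (ltnP #|X| 3) => X3.
    rewrite d3; lia.
  have := h3 X3 a (XnA a aA); rewrite setIC d3; lia.
have hB2' : #|B| = 2 by lia.
have : #|B| == 2 by rewrite hB2'.
case/cards2P=> a1 [a2 [a12 Ea]].
have a1A : a1 \in A by apply: (subsetP sBA); rewrite Ea set21.
have a2A : a2 \in A by apply: (subsetP sBA); rewrite Ea set22.
rewrite Ea cards2 a12.
case: (ltnP #|X| 4) => X4'.
  move: big; rewrite Ea cards2 a12; lia.
have eX : #|X| = 4 by lia.
rewrite leqNgt; apply/negP => lt.
have NBE : NB = nbhd e a1 :|: nbhd e a2.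
  by rewrite /NB Ea bigcup_setU !big_set1.
have d1 := deg3 a1 a1A; have d2 := deg3 a2 a2A; rewrite /deg in d1 d2.
set N1 := nbhd e a1 in NBE d1; set N2 := nbhd e a2 in NBE d2.
have XNB : X \subset NB.
  have : X :&: NB == X.
    rewrite eqEcard subsetIl /= setIC; move: hXI big lt; rewrite hB2' eX; lia.
  by move/eqP=> E; rewrite -E subsetIr.
have cI : #|N1 :&: N2| = 1.
  have := cardsUI N1 N2; rewrite -NBE d1 d2.
  rewrite (setIidPr XNB) in lt.
  move: big lt; rewrite hB2' eX; lia.
have [w wI] : exists w, w \in N1 :&: N2 by apply/card_gt0P; rewrite cI.
have wX : w \notin X.
  apply/negP=> wX.
  have X3 : 2 < #|X| by rewrite eX.
  have c1 := h3 X3 a1 (XnA a1 a1A).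
  have c2 := h3 X3 a2 (XnA a2 a2A).
  rewrite -/N1 in c1; rewrite -/N2 in c2.
  have XU : X = (X :&: N1) :|: (X :&: N2).
    by rewrite -setIUr -NBE; apply/esym/setIidPl.
  have h := cardsUI (X :&: N1) (X :&: N2); rewrite -XU eX in h.
  have : 0 < #|(X :&: N1) :&: (X :&: N2)|.
    apply/card_gt0P; exists w; move: wI; rewrite !inE wX /=; done.
  lia.
apply: (h4 eX); exists w, a1, a2; rewrite wX (XnA a1 a1A) (XnA a2 a2A) a12 /=.
move: wI; rewrite in_setI /N1 /N2 !inE => /andP[e1 e2].
rewrite (e_sym w a1) e1 (e_sym w a2) e2 /=.
by rewrite -NBE.
Qed.
Lemma main_gen X : X \subset D ->
  (forall B, B \subset A -> #|B| <= #|\bigcup_(a in B) (nbhd e a :\: X)|) ->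
  nu e (~: X) = nu e setT.
Proof.
move=> XD hall.
have [HT _] := HC.
have [_ ADn deg3 nuA] := structure e_sym e_irr HC.
have [t0 _] : exists t : V, t \in V by apply/card_gt0P; case: HT.
have [f [finj fN]] := hall_gen t0 (leqnn #|A|) hall.
have XnA : forall a, a \in A -> a \notin X.
  by move=> a aA; apply/negP=> /(subsetP XD) aD; move: (nAD' aA); rewrite aD.
have fP : forall a, a \in A -> [/\ e a (f a), f a \notin X & f a \in D].
  move=> a aA; have := fN a aA; rewrite in_setD inE => /andP[fX eaf].
  by split=> //; apply: ADn eaf.
set Mx := [set [set a; f a] | a in A].
have inj2 : {in A &, injective (fun a => [set a; f a])}.
  move=> a b aA bA E; have := set21 a (f a); rewrite E !inE => /orP[/eqP // | /eqP Eab].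
  have [_ _ fbD] := fP b bA; by move: (nAD' aA); rewrite Eab fbD.
have hMx : matching e (~: X) Mx.
  apply: matchingI.
    move=> g /imsetP[a aA ->]; have [eaf fX _] := fP a aA.
    by exists a, (f a); rewrite !in_setC XnA.
  move=> g h /imsetP[a aA ->] /imsetP[b bA ->] gh.
  have ab : a != b by apply: contraNneq gh => ->.
  have [_ _ faD] := fP a aA; have [_ _ fbD] := fP b bA.
  rewrite disjoints_subset; apply/subsetP=> x; rewrite !inE => /orP[] /eqP ->;
    rewrite negb_or.
  - rewrite ab /=; apply/negP=> /eqP E; by move: (nAD' aA); rewrite E fbD.
  - apply/andP; split; first by apply/negP=> /eqP E; move: (nAD' bA); rewrite -E faD.
    by apply/negP=> /eqP /(finj _ _ aA bA) E; move: ab; rewrite E eqxx.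
apply/eqP; rewrite eqn_leq nu_mono ?subsetT //=.
have := nu_ge hMx; rewrite card_in_imset // -nuA //.
Qed.

End Fin.

Unset Implicit Arguments.

Theorem lemma2 (V : finType) (e : rel V)
  (e_sym : symmetric e) (e_irr : irreflexive e)
  (HT : in_calT e) (X : {set V}) (HX : X \subset Dset e setT) :
  (#|X| <= 2 -> nu e (~: X) = nu e setT) /\
  (#|X| = 3 ->
     (forall w, w \notin X -> #|X :&: nbhd e w| < 3) ->
     nu e (~: X) = nu e setT) /\
  (#|X| = 4 ->
     (forall w, w \notin X -> #|X :&: nbhd e w| < 3) ->
     ~ (exists w u v, [&& w \notin X, u \notin X, v \notin X, u != v,
                          e w u, e w v & X \subset nbhd e u :|: nbhd e v]) ->
     nu e (~: X) = nu e setT).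
Proof.
split; [|split].
- move=> X2; apply: (main_gen e_sym e_irr HT HX); apply: hall_cond => //.
  + by apply: leq_trans X2 _.
  + by move=> X3; move: X2 X3; lia.
  + by move=> X4; move: X2; rewrite X4.
- move=> X3 hw; apply: (main_gen e_sym e_irr HT HX); apply: hall_cond => //.
  + by rewrite X3.
  + by move=> X4; move: X3; rewrite X4.
- move=> X4 hw hn; apply: (main_gen e_sym e_irr HT HX); apply: hall_cond => //.
  by rewrite X4.
Qed.
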